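(* Let $f\in\mathcal{H}^2_{\omega}$ and, for $k\geq1$ and $\lambda\in\mathbb{C}$, $g_{k,\lambda}(z)=z^k+\lambda$. Then $f$ is $\mathcal{H}^2_{\omega}$-inner if and only if for every integer $k\geq 1$ there exist constants $C_k,D_k$ such that $$D_k+|\lambda|^2\leq\|fg_{k,\lambda}\|^2\leq C_k+|\lambda|^2\quad\text{for all }\lambda\in\mathbb{C}.$$
   Context: Let $\omega=\{\omega_n\}_{n\geq 0}$ be a sequence of positive reals with $\omega_0=1$ and $\lim_{n\to\infty}\omega_{n+1}/\omega_n=1$. $\mathcal{H}^2_{\omega}$ is the Hilbert space of power series $f(z)=\sum_{n\ge0}a_nz^n$ with $\|f\|^2=\sum_{n\geq0}\omega_n|a_n|^2<\infty$ and inner product $\langle f,g\rangle=\sum_n\omega_na_n\overline{b_n}$ for $g=\sum b_nz^n$. A function $f\in\mathcal{H}^2_{\omega}$ is $\mathcal{H}^2_{\omega}$-inner if $\|f\|=1$ and $\langle z^mf,f\rangle=0$ for all integers $m\geq1$. *)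

(* Defs.v *)
From Stdlib Require Import Reals Lra Lia.
Open Scope R_scope.

Definition Cplx : Type := (R * R)%type.
Definition C0 : Cplx := (0, 0).
Definition C1 : Cplx := (1, 0).
Definition Cadd (z w : Cplx) : Cplx := (fst z + fst w, snd z + snd w).
Definition Cmul (z w : Cplx) : Cplx :=
  (fst z * fst w - snd z * snd w, fst z * snd w + snd z * fst w).
Definition Cconj (z : Cplx) : Cplx := (fst z, - snd z).
Definition Rscal (r : R) (z : Cplx) : Cplx := (r * fst z, r * snd z).
Definition Cnorm2 (z : Cplx) : R := fst z * fst z + snd z * snd z.

(* A (formal) power series sum_n a_n z^n is given by its coefficient sequence. *)
Definition pseries := nat -> Cplx.

Definition weight (w : nat -> R) : Prop :=
  (forall n, 0 < w n) /\ w 0%nat = 1 /\ Un_cv (fun n => w (S n) / w n) 1.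

Definition has_norm2 (w : nat -> R) (a : pseries) (l : R) : Prop :=
  infinite_sum (fun n => w n * Cnorm2 (a n)) l.

Definition in_H2 (w : nat -> R) (a : pseries) : Prop :=
  exists l, has_norm2 w a l.

Definition Cinfinite_sum (u : nat -> Cplx) (l : Cplx) : Prop :=
  infinite_sum (fun n => fst (u n)) (fst l) /\
  infinite_sum (fun n => snd (u n)) (snd l).

Definition has_inner (w : nat -> R) (a b : pseries) (l : Cplx) : Prop :=
  Cinfinite_sum (fun n => Rscal (w n) (Cmul (a n) (Cconj (b n)))) l.

(* coefficients of z^m f *)
Definition shiftz (m : nat) (a : pseries) : pseries :=
  fun n => if Nat.ltb n m then C0 else a (n - m)%nat.

Definition H2_inner (w : nat -> R) (a : pseries) : Prop :=
  has_norm2 w a 1 /\ forall m : nat, (1 <= m)%nat -> has_inner w (shiftz m a) a C0.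

Fixpoint Csum (u : nat -> Cplx) (n : nat) : Cplx :=
  match n with
  | O => u O
  | S p => Cadd (Csum u p) (u (S p))
  end.

Definition pmul (a b : pseries) : pseries :=
  fun n => Csum (fun i => Cmul (a i) (b (n - i)%nat)) n.

(* g_{k,lambda}(z) = z^k + lambda  (for k >= 1) *)
Definition g_poly (k : nat) (lam : Cplx) : pseries :=
  fun n => Cadd (if Nat.eqb n k then C1 else C0) (if Nat.eqb n 0 then lam else C0).

(* Main.v *)
Require Import Defs.
From Stdlib Require Import Reals Lra Lia Psatz FunctionalExtensionality.
Open Scope R_scope.

Lemma cv_const (c : R) : Un_cv (fun _ => c) c.
Proof. intros e He; exists 0%nat; intros; unfold Rdist; rewrite Rminus_diag, Rabs_R0; lra. Qed.

Lemma isum_lin u v a b c : infinite_sum u a -> infinite_sum v b ->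
  infinite_sum (fun n => u n + c * v n) (a + c * b).
Proof.
  intros Hu Hv.
  assert (H : Un_cv (fun n => sum_f_R0 u n + sum_f_R0 v n * c) (a + b * c)).
  { apply CV_plus; [exact Hu|]. apply CV_mult; [exact Hv| apply cv_const]. }
  intros e He; destruct (H e He) as [N HN]; exists N; intros n Hn.
  specialize (HN n Hn).
  rewrite sum_plus, (sum_eq (fun l => c * v l) (fun l => v l * c)) by (intros; ring).
  rewrite <- scal_sum. replace (a + c*b) with (a + b*c) by ring.
  replace (c * sum_f_R0 v n) with (sum_f_R0 v n * c) by ring. exact HN.
Qed.

Lemma isum_scal u a c : infinite_sum u a -> infinite_sum (fun n => c * u n) (c * a).
Proof.
  intros Hu. assert (H : Un_cv (fun n => sum_f_R0 u n * c) (a * c)).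
  { apply CV_mult; [exact Hu| apply cv_const]. }
  intros e He; destruct (H e He) as [N HN]; exists N; intros n Hn.
  specialize (HN n Hn). rewrite (sum_eq (fun l => c * u l) (fun l => u l * c)) by (intros; ring).
  rewrite <- scal_sum.
  replace (c * sum_f_R0 u n) with (sum_f_R0 u n * c) by ring.
  replace (c*a) with (a*c) by ring. exact HN.
Qed.

Lemma isum_ext u v l l' : (forall n, u n = v n) -> infinite_sum u l -> l = l' ->
  infinite_sum v l'.
Proof.
  intros E Hu <- e He; destruct (Hu e He) as [N HN]; exists N; intros n Hn.
  rewrite <- (sum_eq u v n) by auto. auto.
Qed.

Lemma Cnorm2_ge0 z : 0 <= Cnorm2 z.
Proof. unfold Cnorm2; nra. Qed.

Lemma Csum_fst u n : fst (Csum u n) = sum_f_R0 (fun i => fst (u i)) n.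
Proof. induction n; simpl; [reflexivity| rewrite IHn; reflexivity]. Qed.
Lemma Csum_snd u n : snd (Csum u n) = sum_f_R0 (fun i => snd (u i)) n.
Proof. induction n; simpl; [reflexivity| rewrite IHn; reflexivity]. Qed.

Lemma delta_sum (c : R) j n :
  sum_f_R0 (fun i => if Nat.eqb i j then c else 0) n = if Nat.leb j n then c else 0.
Proof.
  induction n; cbn [sum_f_R0].
  - destruct j; reflexivity.
  - rewrite IHn. destruct (Nat.eqb_spec (S n) j), (Nat.leb_spec j n), (Nat.leb_spec j (S n));
      try lra; exfalso; lia.
Qed.

Lemma sum_sel (G : nat -> R) n j :
  sum_f_R0 (fun i => if Nat.eqb (n - i) j then G i else 0) n =
  if Nat.leb j n then G (n - j)%nat else 0.
Proof.
  rewrite (sum_eq _ (fun i => if Nat.eqb i (n - j) then (if Nat.leb j n then G (n - j)%nat else 0) else 0)).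
  - rewrite delta_sum. destruct (Nat.leb_spec (n-j) n); [|lia]. reflexivity.
  - intros i Hi. destruct (Nat.eqb_spec (n - i) j), (Nat.eqb_spec i (n-j)), (Nat.leb_spec j n);
      try reflexivity; try lia. subst. f_equal. lia.
Qed.

Lemma pmul_fst f k p q n :
  fst (pmul f (g_poly k (p,q)) n) =
  fst (shiftz k f n) + (fst (f n) * p - snd (f n) * q).
Proof.
  unfold pmul. rewrite Csum_fst.
  rewrite (sum_eq _ (fun i => (if Nat.eqb (n - i) k then fst (f i) else 0) +
      (if Nat.eqb (n - i) 0 then fst (f i) * p - snd (f i) * q else 0))).
  - rewrite sum_plus, !sum_sel. unfold shiftz.
    destruct (Nat.leb_spec k n), (Nat.ltb_spec n k); try lia; simpl;
    rewrite Nat.sub_0_r; ring.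
  - intros i _. unfold g_poly.
    destruct (Nat.eqb (n - i) k), (Nat.eqb (n-i) 0); unfold Cmul, Cadd, C0, C1; simpl; ring.
Qed.

Lemma pmul_snd f k p q n :
  snd (pmul f (g_poly k (p,q)) n) =
  snd (shiftz k f n) + (fst (f n) * q + snd (f n) * p).
Proof.
  unfold pmul. rewrite Csum_snd.
  rewrite (sum_eq _ (fun i => (if Nat.eqb (n - i) k then snd (f i) else 0) +
      (if Nat.eqb (n - i) 0 then fst (f i) * q + snd (f i) * p else 0))).
  - rewrite sum_plus, !sum_sel. unfold shiftz.
    destruct (Nat.leb_spec k n), (Nat.ltb_spec n k); try lia; simpl;
    rewrite Nat.sub_0_r; ring.
  - intros i _. unfold g_poly.
    destruct (Nat.eqb (n - i) k), (Nat.eqb (n-i) 0); unfold Cmul, Cadd, C0, C1; simpl; ring.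
Qed.

Lemma key w f k p q n :
  w n * Cnorm2 (pmul f (g_poly k (p,q)) n) =
  w n * Cnorm2 (shiftz k f n) + (p*p+q*q) * (w n * Cnorm2 (f n))
  + (2*p) * fst (Rscal (w n) (Cmul (shiftz k f n) (Cconj (f n))))
  + (2*q) * snd (Rscal (w n) (Cmul (shiftz k f n) (Cconj (f n)))).
Proof.
  unfold Cnorm2 at 1. rewrite pmul_fst, pmul_snd.
  unfold Cnorm2, Rscal, Cmul, Cconj; simpl. ring.
Qed.

Lemma ratio_fin w : (forall n, 0 < w n) -> forall N, exists K, 0 < K /\
  forall n, (n < N)%nat -> w (S n) <= K * w n.
Proof.
  intros Hp N; induction N as [|N [K [HK IH]]].
  - exists 1; split; [lra| intros; lia].
  - exists (Rmax K (w (S N) / w N)); split.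
    + apply Rlt_le_trans with K; [lra| apply Rmax_l].
    + intros n Hn. destruct (Nat.eq_dec n N) as [->|Hne].
      * assert (E : w (S N) = (w (S N) / w N) * w N) by (field; specialize (Hp N); lra).
        rewrite E at 1. apply Rmult_le_compat_r; [specialize (Hp N); lra| apply Rmax_r].
      * specialize (IH n ltac:(lia)). specialize (Hp n).
        assert (K <= Rmax K (w (S N) / w N)) by apply Rmax_l. nra.
Qed.

Lemma ratio_bound w : weight w -> exists K, 0 < K /\ forall n, w (S n) <= K * w n.
Proof.
  intros [Hp [_ Hc]].
  destruct (Hc 1 ltac:(lra)) as [N HN].
  destruct (ratio_fin w Hp N) as [K [HK HK']].
  exists (Rmax K 2); split.
  - apply Rlt_le_trans with K; [lra| apply Rmax_l].
  - intros n. destruct (Nat.lt_ge_cases n N) as [H|H].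
    + specialize (HK' n H). specialize (Hp n). assert (K <= Rmax K 2) by apply Rmax_l. nra.
    + specialize (HN n H). unfold Rdist in HN. apply Rabs_def2 in HN.
      assert (E : w (S n) = (w (S n) / w n) * w n) by (field; specialize (Hp n); lra).
      rewrite E. specialize (Hp n). assert (2 <= Rmax K 2) by apply Rmax_r. nra.
Qed.

Lemma shift1_conv w K b l : 0 < K -> (forall n, 0 < w n) -> (forall n, w (S n) <= K * w n) ->
  has_norm2 w b l -> exists l', has_norm2 w (shiftz 1 b) l'.
Proof.
  intros HK Hp Hw Hb.
  set (t := fun n => w n * Cnorm2 (shiftz 1 b n)).
  assert (Ht0 : t 0%nat = 0) by (unfold t, shiftz; simpl; unfold Cnorm2, C0; simpl; ring).
  assert (HtS : forall i, t (S i) = w (S i) * Cnorm2 (b i)).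
  { intros i; unfold t, shiftz. simpl. rewrite Nat.sub_0_r. reflexivity. }
  assert (Hnn : forall n, 0 <= w n * Cnorm2 (b n)).
  { intros n; specialize (Hp n); specialize (Cnorm2_ge0 (b n)); nra. }
  assert (Hle : forall n, sum_f_R0 (fun n => w n * Cnorm2 (b n)) n <= l).
  { intros n; apply sum_incr; [exact Hb| exact Hnn]. }
  assert (Hl0 : 0 <= l) by (specialize (Hle 0%nat); simpl in Hle; specialize (Hnn 0%nat); lra).
  assert (Hbd : forall n, sum_f_R0 t n <= K * l).
  { intros [|m].
    - simpl. rewrite Ht0. nra.
    - rewrite decomp_sum by lia. simpl Init.Nat.pred. rewrite Ht0.
      rewrite (sum_eq _ (fun i => w (S i) * Cnorm2 (b i))) by (intros; apply HtS).
      apply Rle_trans with (sum_f_R0 (fun i => (w i * Cnorm2 (b i)) * K) m).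
      + rewrite Rplus_0_l. apply sum_Rle. intros i _. specialize (Hw i). specialize (Cnorm2_ge0 (b i)). nra.
      + rewrite <- scal_sum. specialize (Hle m). nra. }
  assert (Hg : Un_growing (sum_f_R0 t)).
  { intros n. simpl. assert (0 <= t (S n)).
    { unfold t. specialize (Hp (S n)); specialize (Cnorm2_ge0 (shiftz 1 b (S n))); nra. }
    lra. }
  destruct (growing_cv _ Hg) as [l' Hl'].
  - exists (K * l). intros x [i ->]. apply Hbd.
  - exists l'. exact Hl'.
Qed.

Lemma shiftz_S k b : shiftz (S k) b = shiftz 1 (shiftz k b).
Proof.
  apply functional_extensionality; intros [|n]; unfold shiftz; simpl; [reflexivity|].
  rewrite Nat.sub_0_r. reflexivity.
Qed.

Lemma shift_conv w b l k : weight w -> has_norm2 w b l -> exists l', has_norm2 w (shiftz k b) l'.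
Proof.
  intros Hw Hb. destruct (ratio_bound w Hw) as [K [HK HK']].
  induction k.
  - exists l. eapply isum_ext; [|exact Hb|reflexivity]. intros n; unfold shiftz; simpl.
    rewrite Nat.sub_0_r. reflexivity.
  - destruct IHk as [l' Hl']. rewrite shiftz_S.
    eapply shift1_conv; eauto. destruct Hw; auto.
Qed.

Lemma real_core A N r i C D : (forall p q,
  D + (p*p+q*q) <= A + (p*p+q*q)*N + 2*p*r + 2*q*i /\
  A + (p*p+q*q)*N + 2*p*r + 2*q*i <= C + (p*p+q*q)) -> N = 1 /\ r = 0 /\ i = 0.
Proof.
  intros H.
  assert (HN : N = 1).
  { destruct (Rtotal_order N 1) as [Hlt|[Heq|Hgt]]; [exfalso| exact Heq| exfalso].
    - set (t := (Rabs (D - A) + 1) / (1 - N)).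
      assert (Ht : 0 <= t) by (unfold t; apply Rmult_le_pos; [specialize (Rabs_pos (D-A)); lra| left; apply Rinv_0_lt_compat; lra]).
      assert (Et : (N - 1) * t = - (Rabs (D - A) + 1)) by (unfold t; field; lra).
      clearbody t.
      destruct (H (sqrt t) 0) as [H1 _]. destruct (H (- sqrt t) 0) as [H2 _].
      rewrite (sqrt_sqrt t Ht) in H1.
      replace (- sqrt t * - sqrt t) with (sqrt t * sqrt t) in H2 by ring.
      rewrite (sqrt_sqrt t Ht) in H2.
      assert (H3 : D + t <= A + t * N) by (ring_simplify in H1; ring_simplify in H2; lra).
      assert (H4 : (N-1)*t >= D - A) by (ring_simplify; lra).
      pose proof (Rle_abs (-(D - A))) as Ha. rewrite Rabs_Ropp in Ha. lra.
    - set (t := (Rabs (C - A) + 1) / (N - 1)).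
      assert (Ht : 0 <= t) by (unfold t; apply Rmult_le_pos; [specialize (Rabs_pos (C-A)); lra| left; apply Rinv_0_lt_compat; lra]).
      assert (Et : (N - 1) * t = (Rabs (C - A) + 1)) by (unfold t; field; lra).
      clearbody t.
      destruct (H (sqrt t) 0) as [_ H1]. destruct (H (- sqrt t) 0) as [_ H2].
      rewrite (sqrt_sqrt t Ht) in H1.
      replace (- sqrt t * - sqrt t) with (sqrt t * sqrt t) in H2 by ring.
      rewrite (sqrt_sqrt t Ht) in H2.
      assert (H3 : A + t * N <= C + t) by (ring_simplify in H1; ring_simplify in H2; lra).
      assert (H4 : (N-1)*t <= C - A) by (ring_simplify; lra).
      specialize (Rle_abs (C - A)). lra. }
  subst N. split; [reflexivity|]. split.
  - destruct (Req_dec r 0) as [|Hr]; [assumption| exfalso].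
    destruct (H ((Rabs (C - A) + 1) / (2*r)) 0) as [_ H1].
    assert (E : 2 * ((Rabs (C - A) + 1) / (2*r)) * r = Rabs (C - A) + 1) by (field; lra).
    specialize (Rle_abs (C - A)). nra.
  - destruct (Req_dec i 0) as [|Hr]; [assumption| exfalso].
    destruct (H 0 ((Rabs (C - A) + 1) / (2*i))) as [_ H1].
    assert (E : 2 * ((Rabs (C - A) + 1) / (2*i)) * i = Rabs (C - A) + 1) by (field; lra).
    specialize (Rle_abs (C - A)). nra.
Qed.

Section Combo.
Variables (w : nat -> R) (f : pseries) (k : nat).
Definition Sq n := w n * Cnorm2 (shiftz k f n).
Definition Fq n := w n * Cnorm2 (f n).
Definition Req n := fst (Rscal (w n) (Cmul (shiftz k f n) (Cconj (f n)))).
Definition Imq n := snd (Rscal (w n) (Cmul (shiftz k f n) (Cconj (f n)))).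
End Combo.

Lemma combo w f k A N r i p q :
  infinite_sum (Sq w f k) A -> infinite_sum (Fq w f) N -> infinite_sum (Req w f k) r ->
  infinite_sum (Imq w f k) i ->
  has_norm2 w (pmul f (g_poly k (p,q))) (A + (p*p+q*q)*N + 2*p*r + 2*q*i).
Proof.
  intros H1 H2 H3 H4.
  pose proof (isum_lin _ _ _ _ (2*q) (isum_lin _ _ _ _ (2*p) (isum_lin _ _ _ _ (p*p+q*q) H1 H2) H3) H4) as H.
  eapply isum_ext; [|exact H|reflexivity].
  intros n. simpl. rewrite key. unfold Sq, Fq, Req, Imq. reflexivity.
Qed.

Lemma core w f k Nf C D : has_norm2 w f Nf ->
  (forall lam, exists l, has_norm2 w (pmul f (g_poly k lam)) l /\ D + Cnorm2 lam <= l /\ l <= C + Cnorm2 lam) ->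
  Nf = 1 /\ has_inner w (shiftz k f) f C0.
Proof.
  intros Hf H.
  destruct (H (0,0)) as [l0 [H0 _]].
  destruct (H (1,0)) as [l1 [H1 _]].
  destruct (H (0,1)) as [l2 [H2 _]].
  assert (HS : infinite_sum (Sq w f k) l0).
  { eapply isum_ext; [|exact H0|reflexivity]. intros n; cbv beta; rewrite key; unfold Sq; ring. }
  assert (HR : infinite_sum (Req w f k) ((l1 + (-1) * l0 + (-1) * Nf) / 2)).
  { pose proof (isum_scal _ _ (/2) (isum_lin _ _ _ _ (-1) (isum_lin _ _ _ _ (-1) H1 HS) Hf)) as HH.
    eapply isum_ext; [|exact HH|unfold Rdiv; ring].
    intros n; cbv beta; rewrite key; unfold Sq, Fq, Req. field. }
  assert (HI : infinite_sum (Imq w f k) ((l2 + (-1) * l0 + (-1) * Nf) / 2)).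
  { pose proof (isum_scal _ _ (/2) (isum_lin _ _ _ _ (-1) (isum_lin _ _ _ _ (-1) H2 HS) Hf)) as HH.
    eapply isum_ext; [|exact HH|unfold Rdiv; ring].
    intros n; cbv beta; rewrite key; unfold Sq, Fq, Imq. field. }
  set (r := (l1 + (-1) * l0 + (-1) * Nf) / 2) in *.
  set (i := (l2 + (-1) * l0 + (-1) * Nf) / 2) in *.
  assert (HB : forall p q,
    D + (p*p+q*q) <= l0 + (p*p+q*q)*Nf + 2*p*r + 2*q*i /\
    l0 + (p*p+q*q)*Nf + 2*p*r + 2*q*i <= C + (p*p+q*q)).
  { intros p q. destruct (H (p,q)) as [l [Hl [Hd Hc]]].
    pose proof (combo w f k _ _ _ _ p q HS Hf HR HI) as Hl'.
    rewrite (uniqueness_sum _ _ _ Hl Hl') in Hd, Hc. unfold Cnorm2 in Hd, Hc; simpl in Hd, Hc.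
    split; assumption. }
  destruct (real_core _ _ _ _ _ _ HB) as [E1 [E2 E3]].
  split; [exact E1|]. split.
  - unfold C0; simpl. rewrite <- E2. exact HR.
  - unfold C0; simpl. rewrite <- E3. exact HI.
Qed.

Theorem mainTheorem3 (w : nat -> R) (f : pseries) :
  weight w -> in_H2 w f ->
  (H2_inner w f <->
   forall k : nat, (1 <= k)%nat ->
     exists Ck Dk : R, forall lam : Cplx,
       exists l : R, has_norm2 w (pmul f (g_poly k lam)) l /\
         Dk + Cnorm2 lam <= l /\ l <= Ck + Cnorm2 lam).
Proof.
  intros Hw [Nf Hf]. split.
  - intros [Hn Hin] k Hk.
    destruct (shift_conv w f Nf k Hw Hf) as [A HA].
    destruct (Hin k Hk) as [HR HI]. unfold C0 in HR, HI; simpl in HR, HI.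
    exists A, A. intros [p q].
    exists (A + (p*p+q*q)*1 + 2*p*0 + 2*q*0). split.
    + apply combo; assumption.
    + unfold Cnorm2; simpl. split; lra.
  - intros H. destruct (H 1%nat (le_n 1)) as [C [D HCD]].
    destruct (core w f 1 Nf C D Hf HCD) as [E _]. subst Nf.
    split; [exact Hf|]. intros m Hm.
    destruct (H m Hm) as [C' [D' HCD']].
    destruct (core w f m 1 C' D' Hf HCD') as [_ HH]. exact HH.
Qed.
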